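(* If $X$ is a crowded (Hausdorff) $\sigma$-space, then $dis(X)=dis^*(X)$.
   Context: All spaces are Hausdorff. A space is crowded if it has no isolated points. A network for $X$ is a family $\mathcal{N}$ of subsets of $X$ such that for every open $U\subseteq X$ and $x\in U$ there is $N\in\mathcal{N}$ with $x\in N\subseteq U$. A $\sigma$-space is a space having a $\sigma$-discrete network. $dis(X)$ is the least number of discrete subspaces needed to cover $X$, and $dis^*(X)$ is the least number of closed discrete subsets needed to cover $X$. *)

(* Defs.v *)
From Stdlib Require Import Classical.

Set Implicit Arguments.


Record TopSpace := {
  carrier :> Type;
  is_open : (carrier -> Prop) -> Prop;
  open_full : is_open (fun _ => True);
  open_inter : forall U V, is_open U -> is_open V -> is_open (fun x => U x /\ V x);
  open_union : forall F : (carrier -> Prop) -> Prop,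
      (forall U, F U -> is_open U) -> is_open (fun x => exists U, F U /\ U x)
}.

Section Defs.
Variable X : TopSpace.

Definition is_closed (A : X -> Prop) : Prop := is_open X (fun x => ~ A x).

Definition hausdorff : Prop :=
  forall x y : X, x <> y ->
    exists U V, is_open X U /\ is_open X V /\ U x /\ V y /\ (forall z, ~ (U z /\ V z)).

(* x is isolated in X iff {x} is open. *)
Definition crowded : Prop :=
  forall x : X, ~ is_open X (fun y => y = x).

Definition discrete_subspace (D : X -> Prop) : Prop :=
  forall x, D x -> exists U, is_open X U /\ U x /\ (forall y, U y -> D y -> y = x).

Definition closed_discrete (D : X -> Prop) : Prop :=
  is_closed D /\ discrete_subspace D.

Definition discrete_family (F : (X -> Prop) -> Prop) : Prop :=
  forall x : X, exists U, is_open X U /\ U x /\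
    forall A B, F A -> F B ->
      (exists a, U a /\ A a) -> (exists b, U b /\ B b) ->
      (forall z, A z <-> B z).

Definition is_network (N : (X -> Prop) -> Prop) : Prop :=
  forall U x, is_open X U -> U x ->
    exists A, N A /\ A x /\ (forall z, A z -> U z).

Definition sigma_space : Prop :=
  exists Nn : nat -> (X -> Prop) -> Prop,
    (forall n, discrete_family (Nn n)) /\
    is_network (fun A => exists n, Nn n A).

(* "X can be covered by |I| discrete subspaces", i.e. dis(X) <= |I|. *)
Definition dis_cover (I : Type) : Prop :=
  exists D : I -> X -> Prop,
    (forall i, discrete_subspace (D i)) /\ (forall x, exists i, D i x).

(* "X can be covered by |I| closed discrete subsets", i.e. dis*(X) <= |I|. *)
Definition dis_star_cover (I : Type) : Prop :=
  exists D : I -> X -> Prop,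
    (forall i, closed_discrete (D i)) /\ (forall x, exists i, D i x).

End Defs.

(* Main.v *)
Require Import Defs.
From Stdlib Require Import Classical ClassicalEpsilon FunctionalExtensionality PropExtensionality List Cantor Lia Arith.
Set Implicit Arguments.

Lemma pred_ext (T : Type) (P Q : T -> Prop) : (forall x, P x <-> Q x) -> P = Q.
Proof. intros H; apply functional_extensionality; intro x; apply propositional_extensionality; auto. Qed.

Section Zorn.
Variable T : Type.
Variable F : (T -> Prop) -> Prop.
Definition sub (A B : T -> Prop) := forall x, A x -> B x.
Definition chain (C : (T -> Prop) -> Prop) := forall A B, C A -> C B -> sub A B \/ sub B A.
Definition Union (C : (T -> Prop) -> Prop) := fun x => exists A, C A /\ A x.
Hypothesis Fch : forall C, (forall A, C A -> F A) -> chain C -> F (Union C).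

Theorem zorn : exists M, F M /\ forall N, F N -> sub M N -> sub N M.
Proof.
  apply NNPP; intro Hno.
  assert (H : forall M, exists N, F M -> F N /\ sub M N /\ ~ sub N M).
  { intro M. destruct (classic (F M)) as [FM|nFM].
    - apply NNPP; intro Hn. apply Hno. exists M; split; auto.
      intros N FN MN. apply NNPP; intro NM. apply Hn. exists N; auto.
    - exists M; tauto. }
  set (next := fun M => proj1_sig (constructive_indefinite_description _ (H M))).
  assert (Pn : forall M, F M -> F (next M) /\ sub M (next M) /\ ~ sub (next M) M).
  { intro M. unfold next. destruct (constructive_indefinite_description _ (H M)); simpl; auto. }
  clearbody next.
  set (tower := fun A => forall G : (T -> Prop) -> Prop,
     (forall B, G B -> G (next B)) ->
     (forall C, (forall B, C B -> G B) -> chain C -> G (Union C)) -> G A).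
  assert (Tn : forall B, tower B -> tower (next B)).
  { intros B HB G G1 G2. apply G1. apply HB; auto. }
  assert (Tu : forall C, (forall B, C B -> tower B) -> chain C -> tower (Union C)).
  { intros C HC Hch G G1 G2. apply G2; auto. intros B CB. apply HC; auto. }
  assert (TF : forall A, tower A -> F A).
  { intros A HA. apply HA. intros B FB; apply Pn; auto. intros C HC Hc; apply Fch; auto. }
  set (ext := fun c => tower c /\ forall x, tower x -> sub x c -> ~ sub c x -> sub (next x) c).
  assert (LA : forall c, ext c -> forall x, tower x -> sub x c \/ sub (next c) x).
  { intros c [Tc Ec] x Tx.
    refine (proj2 (Tx (fun x => tower x /\ (sub x c \/ sub (next c) x)) _ _)).
    - intros B [TB [Bc|cB]]; split; auto.
      + destruct (classic (sub c B)) as [cB|ncB].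
        * assert (B = c) by (apply pred_ext; intro; split; auto). subst B.
          right; intros z Hz; auto.
        * left; apply Ec; auto.
      + right. intros z Hz. apply (proj1 (proj2 (Pn B (TF B TB)))); auto.
    - intros C HC Hch. split. { apply Tu; [intros B CB; exact (proj1 (HC B CB))|exact Hch]. }
      destruct (classic (exists B, C B /\ ~ sub B c)) as [[B [CB nB]]|nex].
      + right. destruct (HC B CB) as [_ [Bc|cB]]. contradiction.
        intros z Hz. exists B; auto.
      + left. intros z [B [CB Bz]]. apply NNPP; intro nz. apply nex. exists B; split; [exact CB| intro Hs; apply nz; apply Hs; exact Bz]. }
  assert (LB : forall c, tower c -> ext c).
  { intros c Tc. apply Tc.
    - intros B [TB EB]. split. apply Tn; auto.
      intros x Tx xn nnx. destruct (LA B (conj TB EB) x Tx) as [xB|nBx].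
      + destruct (classic (sub B x)) as [Bx|nBx].
        * assert (x = B) by (apply pred_ext; intro; split; auto). subst x. intros z; auto.
        * intros z Hz. apply (proj1 (proj2 (Pn B (TF B TB)))). apply (EB x Tx xB nBx); exact Hz.
      + exfalso; apply nnx; auto.
    - intros C HC Hch. split. { apply Tu; [intros B CB; exact (proj1 (HC B CB))|exact Hch]. }
      intros x Tx xU nUx.
      destruct (classic (exists B, C B /\ ~ sub B x)) as [[B [CB nBx]]|nex].
      + destruct (HC B CB) as [TB EB].
        destruct (LA B (HC B CB) x Tx) as [xB|nBx'].
        * intros z Hz. exists B; split; [exact CB|]. apply (EB x Tx xB nBx); exact Hz.
        * exfalso. apply nBx. intros z Hz. apply nBx'. apply (proj1 (proj2 (Pn B (TF B TB)))); auto.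
      + exfalso. apply nUx. intros z [B [CB Bz]]. apply NNPP; intro nz. apply nex.
        exists B; split; [exact CB| intro Hs; apply nz; apply Hs; exact Bz]. }
  assert (Tch : chain tower).
  { intros A B TA TB. destruct (LA A (LB A TA) B TB) as [BA|AB]; auto.
    left. intros z Hz. apply AB. apply (proj1 (proj2 (Pn A (TF A TA)))); auto. }
  assert (TU : tower (Union tower)) by (apply Tu; auto).
  destruct (Pn _ (TF _ TU)) as [_ [_ Hns]]. apply Hns.
  intros z Hz. exists (next (Union tower)). split; auto.
Qed.
End Zorn.

Lemma inj_from_inf (I : Type) (Q : I -> Prop) :
  (forall l : list I, exists i, Q i /\ ~ In i l) ->
  exists h : nat -> I, (forall m n, h m = h n -> m = n) /\ forall n, Q (h n).
Proof.
  intros H.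
  set (c := fun l => proj1_sig (constructive_indefinite_description _ (H l))).
  assert (Hc : forall l, Q (c l) /\ ~ In (c l) l).
  { intro l; unfold c; destruct (constructive_indefinite_description _ (H l)); auto. }
  clearbody c.
  set (L := fix L n := match n with 0 => nil | S n => c (L n) :: L n end).
  exists (fun n => c (L n)). split; [|intro n; apply Hc].
  assert (Hin : forall m n, m < n -> In (c (L m)) (L n)).
  { intros m n; induction n; intros Hmn. lia.
    simpl. destruct (Nat.eq_dec m n). subst; left; auto. right; apply IHn; lia. }
  intros m n E. destruct (Nat.lt_trichotomy m n) as [h|[h|h]]; auto.
  - exfalso. apply (proj2 (Hc (L n))). rewrite <- E. apply Hin; auto.
  - exfalso. apply (proj2 (Hc (L m))). rewrite E. apply Hin; auto.
Qed.

Lemma absorb (I : Type) : (forall l : list I, exists i, ~ In i l) ->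
  exists g : I -> I * nat, forall p, exists i, g i = p.
Proof.
  intros Hinf.
  set (F := fun S : I * (I * nat) -> Prop =>
     (forall i p q, S (i, p) -> S (i, q) -> p = q) /\
     (forall b n, (exists p, S (b, p)) -> exists i, S (i, (b, n)))).
  destruct (zorn F) as [M [[Mfun Msur] Mmax]].
  { intros C HC Hch. split.
    - intros i p q [A [CA Ap]] [B [CB Bq]].
      destruct (Hch A B CA CB) as [AB|BA].
      + apply (proj1 (HC B CB) i); auto.
      + apply (proj1 (HC A CA) i); auto.
    - intros b n [p [A [CA Ap]]].
      destruct (proj2 (HC A CA) b n (ex_intro _ p Ap)) as [i Hi].
      exists i; exists A; auto. }
  set (B := fun b => exists p, M (b, p)).
  destruct (classic (exists l : list I, forall i, ~ B i -> In i l)) as [[L HL]|Hno].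
  2:{ exfalso.
      destruct (inj_from_inf (fun i => ~ B i)) as [h [hinj hQ]].
      { intro l. apply NNPP; intro nn. apply Hno. exists l. intros i nBi.
        apply NNPP; intro ni. apply nn. exists i; auto. }
      set (S' := fun t : I * (I * nat) => M t \/ exists k,
          t = (h k, (h (fst (of_nat k)), snd (of_nat k)))).
      assert (FS : F S').
      { split.
        - intros i p q [Mp|[k Ek]] [Mq|[k' Ek']].
          + eauto.
          + exfalso. injection Ek'; intros; subst. apply (hQ k'). exists p; auto.
          + exfalso. injection Ek; intros; subst. apply (hQ k). exists q; auto.
          + injection Ek; injection Ek'; intros; subst.
            assert (k = k') by (apply hinj; congruence). subst; auto.
        - intros b n [p [Mp|[k Ek]]].
          + destruct (Msur b n (ex_intro _ p Mp)) as [i Hi]. exists i; left; auto.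
          + injection Ek; intros; subst.
            exists (h (to_nat (k, n))). right. exists (to_nat (k, n)).
            rewrite cancel_of_to. reflexivity. }
      assert (MS : sub M S') by (intros t Ht; left; auto).
      specialize (Mmax S' FS MS).
      apply (hQ 0). exists (h (fst (of_nat 0)), snd (of_nat 0)).
      apply Mmax. right; exists 0; auto. }
  destruct (Hinf L) as [b0 nb0].
  assert (Bb0 : B b0) by (apply NNPP; intro; apply nb0; auto).
  set (f := fun p : I * nat => let (b', n) := p in
     match of_nat n with
     | (0, j) => (b', j)
     | (S k, j) => match nth_error L k with Some l => (l, j) | None => (b', j) end
     end).
  assert (Hg : forall i, exists q, forall p, M (i, p) -> q = f p).
  { intro i. destruct (classic (exists p, M (i, p))) as [[p Mp]|np].
    - exists (f p). intros p' Mp'. rewrite (Mfun i p p'); auto.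
    - exists (i, 0). intros p Mp. exfalso; apply np; eauto. }
  exists (fun i => proj1_sig (constructive_indefinite_description _ (Hg i))).
  intros [b n].
  destruct (classic (B b)) as [Bb|nBb].
  - destruct (Msur b (to_nat (0, n)) Bb) as [i Hi]. exists i.
    destruct (constructive_indefinite_description _ (Hg i)) as [q Hq]; simpl.
    rewrite (Hq _ Hi). unfold f. rewrite cancel_of_to. reflexivity.
  - destruct (In_nth_error _ _ (HL b nBb)) as [k Hk].
    destruct (Msur b0 (to_nat (S k, n)) Bb0) as [i Hi]. exists i.
    destruct (constructive_indefinite_description _ (Hg i)) as [q Hq]; simpl.
    rewrite (Hq _ Hi). unfold f. rewrite cancel_of_to. rewrite Hk. reflexivity.
Qed.

Lemma open_ext (X : TopSpace) (U V : X -> Prop) : is_open X U -> (forall x, U x <-> V x) -> is_open X V.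
Proof. intros HU H. replace V with U; auto. apply pred_ext; auto. Qed.

Lemma open_of_local (X : TopSpace) (V : X -> Prop) :
  (forall x, V x -> exists U, is_open X U /\ U x /\ forall z, U z -> V z) -> is_open X V.
Proof.
  intros H. apply open_ext with (fun x => exists U, (is_open X U /\ forall z, U z -> V z) /\ U x).
  - apply open_union. intros U [HU _]; auto.
  - intro x; split.
    + intros [U [[_ HU] Ux]]; auto.
    + intros Vx. destruct (H x Vx) as [U [HU [Ux HUV]]]. exists U; auto.
Qed.

Lemma open_ne (X : TopSpace) (y : X) : hausdorff X -> is_open X (fun z => z <> y).
Proof.
  intros Hh. apply open_of_local. intros x nxy.
  destruct (Hh x y nxy) as [U [V [HU [HV [Ux [Vy Hd]]]]]].
  exists U; split; [exact HU|split; [exact Ux|]]. intros z Uz E; subst. apply (Hd y); auto.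
Qed.

Lemma avoid (X : TopSpace) (I : Type) (D : I -> X -> Prop) :
  hausdorff X -> crowded X -> (forall i, discrete_subspace X (D i)) ->
  forall l : list I, forall U, is_open X U -> (exists x, U x) ->
    exists x, U x /\ forall i, In i l -> ~ D i x.
Proof.
  intros Hh Hc HD l. induction l as [|i0 l IH]; intros U HU [x0 Ux0].
  - exists x0; split; [exact Ux0|intros i []].
  - destruct (classic (exists y, U y /\ D i0 y)) as [[y [Uy Dy]]|ny].
    + destruct (HD i0 y Dy) as [V [HV [Vy HVD]]].
      set (W := fun z => (U z /\ V z) /\ z <> y).
      assert (HW : is_open X W) by (apply open_inter; [apply open_inter|apply open_ne]; auto).
      assert (Wne : exists x, W x).
      { apply NNPP; intro nW. apply (Hc y).
        apply open_ext with (fun z => U z /\ V z). apply open_inter; auto.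
        intro z; split.
        - intros HUV. apply NNPP; intro nz. apply nW. exists z. split; auto.
        - intros ->; auto. }
      destruct (IH W HW Wne) as [x [[[Ux Vx] nxy] Hx]].
      exists x; split; [exact Ux|]. intros i [<-|Hi]; [intro Dx; apply nxy; apply HVD; auto | auto].
    + destruct (IH U HU (ex_intro _ x0 Ux0)) as [x [Ux Hx]].
      exists x; split; [exact Ux|]. intros i [<-|Hi]; [intro Dx; apply ny; eauto | auto].
Qed.

Section Pieces.
Variable X : TopSpace.
Hypothesis Hh : hausdorff X.
Variable Nn : nat -> (X -> Prop) -> Prop.
Hypothesis Hfam : forall n, discrete_family X (Nn n).
Variable D : X -> Prop.

Definition piece n := fun d => D d /\ exists A, Nn n A /\ A d /\ forall y, A y -> D y -> y = d.

Lemma piece_uniq n x : exists U, is_open X U /\ U x /\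
   forall d d', U d -> U d' -> piece n d -> piece n d' -> d = d'.
Proof.
  destruct (Hfam n x) as [U [HU [Ux HF]]]. exists U; repeat split; auto.
  intros d d' Ud Ud' [Dd [A [NA [Ad HA]]]] [Dd' [A' [NA' [Ad' HA']]]].
  assert (E := HF A A' NA NA' (ex_intro _ d (conj Ud Ad)) (ex_intro _ d' (conj Ud' Ad'))).
  symmetry. apply HA; auto. apply E; auto.
Qed.

Lemma piece_cd n : closed_discrete X (piece n).
Proof.
  split.
  - apply open_of_local. intros x nx.
    destruct (piece_uniq n x) as [U [HU [Ux Hu]]].
    destruct (classic (exists d, U d /\ piece n d)) as [[d [Ud Pd]]|nd].
    + assert (xd : x <> d) by (intro; subst; auto).
      destruct (@Hh x d xd) as [W [W' [HW [HW' [Wx [W'd Hd]]]]]].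
      exists (fun z => U z /\ W z). split; [apply open_inter; auto|split; [auto|]].
      intros z [Uz Wz] Pz. assert (z = d) by (apply Hu; auto). subst. apply (Hd d); auto.
    + exists U; split; [exact HU|split; [exact Ux|]]. intros z Uz Pz; apply nd; eauto.
  - intros d Pd. destruct (piece_uniq n d) as [U [HU [Ud Hu]]].
    exists U; split; [exact HU|split; [exact Ud|]]. intros y Uy Py. apply Hu; auto.
Qed.
End Pieces.

Theorem mainTheorem4 (X : TopSpace) :
  hausdorff X -> crowded X -> sigma_space X ->
  forall I : Type, dis_cover X I <-> dis_star_cover X I.
Proof.
  intros Hh Hc [Nn [Hfam Hnet]] I. split.
  - intros [D [HD Hcov]].
    destruct (classic (exists x : X, True)) as [[x0 _]|nX].
    2:{ exists (fun _ _ => False). split.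
        - intro i. split.
          + apply open_ext with (fun _ => True). apply open_full. intro x; split; auto.
          + intros x [].
        - intro x; exfalso; apply nX; eauto. }
    assert (Hinf : forall l : list I, exists i, ~ In i l).
    { intro l. destruct (@avoid X I D Hh Hc HD l (fun _ => True) (open_full X) (ex_intro _ x0 Logic.I))
        as [x [_ Hx]].
      destruct (Hcov x) as [j Dj]. exists j. intro Hj. apply (Hx j Hj Dj). }
    destruct (absorb Hinf) as [g Hg].
    exists (fun i => @piece X Nn (D (fst (g i))) (snd (g i))). split.
    + intro i. apply (@piece_cd X Hh Nn Hfam).
    + intro x. destruct (Hcov x) as [j Dj].
      destruct (HD j x Dj) as [U [HU [Ux HUD]]].
      destruct (Hnet U x HU Ux) as [A [[n NA] [Ax AU]]].
      destruct (Hg (j, n)) as [i Ei]. exists i. rewrite Ei. simpl.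
      split; auto. exists A; repeat split; auto.
  - intros [D [HD Hcov]]. exists D; split; auto. intro i; apply (HD i).
Qed.
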